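(* Let $A$ be a commutative ring with identity and $G$ a subgroup of the group $A^\times$ of units of $A$. Then the hypergroup $(A/G,\oplus)$ is realizable.
   Context: $G$ induces the equivalence relation $a\sim b\iff a=gb$ for some $g\in G$ on $A$; $A/G=\{[a]:a\in A\}$ is the set of classes, with hyperaddition $[a]\oplus[b]=\{[c]: c=g_1a+g_2b \text{ for some } g_1,g_2\in G\}$. A hypergroup is a nonempty set with a hyperoperation into nonempty subsets that is associative, has a unique identity $e$, unique inverses $h^{-1}$ with $e\in(h^{-1}*h)\cap(h*h^{-1})$, and is reversible ($c\in a*b\Rightarrow a\in c*b^{-1},\ b\in a^{-1}*c$). For a nonempty set $X$: $1_X$ is the diagonal, $p^*=\{(a,b):(b,a)\in p\}$, $xp=\{y:(x,y)\in p\}$. An association scheme on $X$ is a partition $S$ of $X\times X$ with $1_X\in S$, closed under $p\mapsto p^*$, such that for all $p,q,r\in S$ there is a cardinal $a_{pq}^r$ with $|yp\cap zq^*|=a_{pq}^r$ for all $y\in X$, $z\in yr$. $\mathbf{H}(S)$ is the hypergroup on $S$ with $p*q=\{r: a_{pq}^r\ge1\}$, identity $1_X$, inverse $p^*$. A hypergroup is realizable if it is isomorphic to $\mathbf{H}(S)$ for some association scheme $S$. *)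

(* Defs.v *)
From mathcomp Require Import all_boot all_algebra.
Set Implicit Arguments. Unset Strict Implicit. Unset Printing Implicit Defensive.
Import GRing.Theory.
Local Open Scope ring_scope.

Definition unit_subgroup (A : comPzRingType) (G : A -> Prop) : Prop :=
  [/\ G 1,
      (forall g, G g -> exists v, g * v = 1),
      (forall g h, G g -> G h -> G (g * h)) &
      (forall g, G g -> exists h, G h /\ g * h = 1)].

Definition cls (A : comPzRingType) (G : A -> Prop) (a : A) : A -> Prop :=
  fun b => exists g, G g /\ b = g * a.

Definition quot (A : comPzRingType) (G : A -> Prop) : Type :=
  {C : A -> Prop | exists a, C = cls G a}.

Definition quot_hop (A : comPzRingType) (G : A -> Prop) (C D E : quot G) : Prop :=
  exists a b c g1 g2, [/\ sval C = cls G a, sval D = cls G b, sval E = cls G c,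
    G g1 /\ G g2 & c = g1 * a + g2 * b].

Definition equipotent (X : Type) (P Q : X -> Prop) : Prop :=
  exists f : {x | P x} -> {x | Q x}, bijective f.

(* An association scheme on X, presented as a family of relations (rel i)
   indexed by a type I of labels, whose members are the classes of S. *)
Record assoc_scheme (X I : Type) (rel : I -> X -> X -> Prop) : Prop := {
  as_nonempty : forall i, exists x y, rel i x y;
  as_cover : forall x y, exists i, rel i x y;
  as_disjoint : forall i j x y, rel i x y -> rel j x y -> i = j;
  as_diag : exists i0, forall x y, rel i0 x y <-> x = y;
  as_transp : forall i, exists j, forall x y, rel j x y <-> rel i y x;
  (* |yp ∩ zq*| is the same cardinal a_pq^r for all (y,z) in r;
     note zq* = {x | (x,z) in q} *)
  as_regular : forall p q r y z y' z', rel r y z -> rel r y' z' ->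
    equipotent (fun x => rel p y x /\ rel q x z)
               (fun x => rel p y' x /\ rel q x z')
}.

(* r \in p * q in H(S), i.e. a_pq^r >= 1 *)
Definition scheme_hop (X I : Type) (rel : I -> X -> X -> Prop) (p q r : I) : Prop :=
  exists y z x, [/\ rel r y z, rel p y x & rel q x z].

(* a hypergroup (H, hop) (hop a b c <-> c \in a * b) is realizable *)
Definition realizable (H : Type) (hop : H -> H -> H -> Prop) : Prop :=
  exists (X I : Type) (rel : I -> X -> X -> Prop),
    assoc_scheme rel /\
    exists phi : H -> I, bijective phi /\
      forall a b c, hop a b c <-> scheme_hop rel (phi a) (phi b) (phi c).

(* Main.v *)
Require Import Defs.
From mathcomp Require Import all_boot all_algebra.
From mathcomp Require Import ring.
From Stdlib Require Import ProofIrrelevance FunctionalExtensionality PropExtensionality.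
Import GRing.Theory.
Local Open Scope ring_scope.
Set Implicit Arguments.

Section S.
Variables (A : comPzRingType) (G : A -> Prop).
Hypothesis HG : unit_subgroup G.

Lemma cls_eq a t : cls G a t -> cls G a = cls G t.
Proof.
case: HG => G1 _ GM GI [g [Gg ->]].
have [h [Gh gh]] := GI g Gg.
apply: functional_extensionality => s; apply: propositional_extensionality.
split.
- move=> [k [Gk ->]]; exists (k * h); split; first exact: GM.
  by rewrite mulrA -(mulrA k h g) (mulrC h g) gh mulr1.
- move=> [k [Gk ->]]; exists (k * g); split; first exact: GM.
  by rewrite mulrA.
Qed.

Lemma quot_mul (C : quot G) t k : sval C t -> G k -> sval C (k * t).
Proof.
case: C => C [a E] /=; rewrite E => -[g [Gg ->]] Gk.
case: HG => _ _ GM _.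
exists (k * g); split; first exact: GM. by rewrite mulrA.
Qed.

Lemma quot_ext (C D : quot G) : sval C = sval D -> C = D.
Proof.
case: C => C pC; case: D => D pD /= E; subst.
by rewrite (proof_irrelevance _ pC pD).
Qed.

Definition rl (C : quot G) (x y : A) : Prop := sval C (y - x).

Definition mk (a : A) : quot G := exist _ (cls G a) (ex_intro _ a erefl).

Lemma cls_self a : cls G a a.
Proof. case: HG => G1 _ _ _; exists 1; split => //; by rewrite mul1r. Qed.

Lemma quot_cls (C : quot G) t : sval C t -> sval C = cls G t.
Proof. case: C => C [a E] /=; rewrite E => H; exact: cls_eq. Qed.

Lemma scheme : assoc_scheme rl.
Proof.
split.
- move=> [C [a E]]; exists 0, a; rewrite /rl /= E subr0; exact: cls_self.
- move=> x y; exists (mk (y - x)); exact: cls_self.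
- move=> i j x y Hi Hj; apply: quot_ext.
  by rewrite (@quot_cls i _ Hi) (@quot_cls j _ Hj).
- exists (mk 0) => x y; rewrite /rl /=; split.
  + move=> [g [_]]; rewrite mulr0 => /eqP; rewrite subr_eq0 => /eqP ->//.
  + move=> ->; exists 1; split; first by case: HG.
    by rewrite subrr mulr0.
- move=> [C [a E]]; exists (mk (- a)) => x y; rewrite /rl /= E; split.
  + move=> [g [Gg H]]; exists g; split => //.
    by rewrite -opprB H mulrN opprK.
  + move=> [g [Gg H]]; exists g; split => //.
    by rewrite -opprB H mulrN.
- move=> p q r y z y' z' Hr Hr'.
  case: HG => G1 _ GM GI.
  move: Hr Hr'; rewrite /rl; case: r => r [c E] /=; rewrite E => -[g [Gg Eg]] [h [Gh Eh]].
  have [gi [Ggi ggi]] := GI g Gg.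
  set k := h * gi.
  have Gk : G k by exact: GM.
  have [ki [Gki kki]] := GI k Gk.
  have Ek : z' - y' = k * (z - y).
    by rewrite Eh Eg /k mulrA -(mulrA h gi g) (mulrC gi g) ggi mulr1.
  have Eki : z - y = ki * (z' - y').
    by rewrite Ek mulrA (mulrC ki k) kki mul1r.
  have f1 : forall x, rl p y x /\ rl q x z ->
      rl p y' (y' + k * (x - y)) /\ rl q (y' + k * (x - y)) z'.
    move=> x [H1 H2]; split; rewrite /rl.
    + have -> : y' + k * (x - y) - y' = k * (x - y) by ring.
      exact: quot_mul.
    + have -> : z' - (y' + k * (x - y)) = k * (z - x).
        have -> : z' = y' + k * (z - y) by rewrite -Ek; ring.
        ring.
      exact: quot_mul.
  have f2 : forall x, rl p y' x /\ rl q x z' ->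
      rl p y (y + ki * (x - y')) /\ rl q (y + ki * (x - y')) z.
    move=> x [H1 H2]; split; rewrite /rl.
    + have -> : y + ki * (x - y') - y = ki * (x - y') by ring.
      exact: quot_mul.
    + have -> : z - (y + ki * (x - y')) = ki * (z' - x).
        have -> : z = y + ki * (z' - y') by rewrite -Eki; ring.
        ring.
      exact: quot_mul.
  exists (fun u => exist _ _ (f1 (sval u) (svalP u))).
  exists (fun u => exist _ _ (f2 (sval u) (svalP u))).
  + move=> [x Hx]; apply: eq_sig_hprop => /=.
      by move=> ? ? ?; apply: proof_irrelevance.
    rewrite -[RHS](_ : y + (k * ki) * (x - y) = x); first by congr (_ + _); ring.
    by rewrite kki mul1r; ring.
  + move=> [x Hx]; apply: eq_sig_hprop => /=.
      by move=> ? ? ?; apply: proof_irrelevance.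
    rewrite -[RHS](_ : y' + (k * ki) * (x - y') = x); first by congr (_ + _); ring.
    by rewrite kki mul1r; ring.
Qed.

End S.

Theorem proposition5p14 (A : comPzRingType) (G : A -> Prop) :
  unit_subgroup G -> realizable (@quot_hop A G).
Proof.
move=> HG; exists A, (quot G), (@rl A G); split; first exact: scheme.
exists id; split; first by exists id.
move=> C D E; split.
- move=> [a [b [c [g1 [g2 [EC ED EE [Gg1 Gg2] Ec]]]]]].
  exists 0, c, (g1 * a); split; rewrite /rl.
  + rewrite EE subr0; exact: cls_self.
  + rewrite EC subr0; exists g1; split => //.
  + rewrite ED; exists g2; split => //; rewrite Ec; ring.
- move=> [y [z [x [HE HC HD]]]]; move: HE HC HD; rewrite /rl.
  move=> HE HC HD.
  have [a EC] := svalP C; have [b ED] := svalP D; have [c0 EE] := svalP E.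
  move: HC HD; rewrite EC ED => -[g1 [Gg1 E1]] [g2 [Gg2 E2]].
  exists a, b, (z - y), g1, g2; split => //.
  + by rewrite EE; apply: cls_eq => //; rewrite -EE.
  + by rewrite -E1 -E2; ring.
Qed.
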